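(* Let $R$ be a finite principal left ideal ring, $<$ a respectful order on $R$, $B$ an ordered basis of $R^n$, and $P$ a left multiplicative property on $R^n$ with $P[0]$ true. Then the lexicode $C(<,B,P)$ is maximal with respect to inclusion among all left submodules $C\subseteq R^n$ such that $P[x]$ holds for all $x\in C$; i.e., there is no left submodule $C$ with $C(<,B,P)\subsetneq C\subseteq R^n$ all of whose elements satisfy $P$.
   Context: $R^\ast$ is the unit group of $R$. A property $P:R^n\to\{\text{true},\text{false}\}$ is left multiplicative if $P[ux]=P[x]$ for all $u\in R^\ast$, $x\in R^n$. A total order $<$ on $R$ is respectful if for all nonzero $x,y\in R$ with $Rx\supsetneq Ry$ there is $\alpha\in R^\ast$ with $\alpha x<uy$ for all $u\in R^\ast$. Fix an ordered basis $B=(b_1,\dots,b_n)$ of the free left module $R^n$; put $V_0=\{0\}$ and $V_i=Rb_1+\dots+Rb_i$. The lexicographic order on $R^n$: if $x\in V_{i-1}$ and $y\in V_i\setminus V_{i-1}$ then $x<y$; if $x\ne y$ both lie in $V_i\setminus V_{i-1}$, write $x=\sum_{j\le i}x_jb_j$, $y=\sum_{j\le i}y_jb_j$, let $k$ be the largest index with $x_k\ne y_k$, and set $x<y$ iff $x_k<y_k$ in $R$. Fix a set $\Gamma\subseteq R$ containing one generator of each nonzero left ideal of $R$. Greedy algorithm: $C_0=\{0\}$; for $i=1,\dots,n$, let $a_i$ be the smallest vector of $V_i\setminus V_{i-1}$ (if any) such that $P[\gamma a_i+c]$ is true for all $\gamma\in\Gamma$ and all $c\in C_{i-1}$; if such $a_i$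 exists set $C_i=Ra_i+C_{i-1}$, otherwise $C_i=C_{i-1}$. The lexicode is $C(<,B,P):=C_n$. *)

(* Defs.v *)
From HB Require Import structures.
From mathcomp Require Import all_boot all_order all_algebra.
Set Implicit Arguments. Unset Strict Implicit. Unset Printing Implicit Defensive.
Import GRing.Theory.
Local Open Scope ring_scope.

Section Lexicodes.
Variable R : finUnitRingType.

Definition left_ideal (I : {set R}) : Prop :=
  [/\ 0 \in I, {in I &, forall x y, x - y \in I} & forall r, {in I, forall x, r * x \in I}].

Definition lprincipal (x : R) : {set R} := [set r * x | r : R].

Definition principal_left_ideal_ring : Prop :=
  forall I : {set R}, left_ideal I -> exists g : R, I = lprincipal g.

Definition strict_total_order (lt : rel R) : Prop :=
  [/\ forall x, ~~ lt x x,
      forall x y z, lt x y -> lt y z -> lt x z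
    & forall x y, x != y -> lt x y || lt y x].

Definition respectful (lt : rel R) : Prop :=
  forall x y : R, x != 0 -> y != 0 ->
    lprincipal y \proper lprincipal x ->
    exists2 alpha, alpha \is a GRing.unit &
      forall u, u \is a GRing.unit -> lt (alpha * x) (u * y).

Definition generator_set (Gamma : {set R}) : Prop :=
  (forall g, g \in Gamma -> lprincipal g != [set 0]) /\
  (forall I : {set R}, left_ideal I -> I != [set 0] ->
     exists! g, g \in Gamma /\ I = lprincipal g).

Variable n : nat.
Notation vec := 'rV[R]_n.

Definition left_multiplicative (P : pred vec) : Prop :=
  forall (u : R) (x : vec), u \is a GRing.unit -> P (u *: x) = P x.

Definition left_submodule (C : {set vec}) : Prop :=
  [/\ 0 \in C, {in C &, forall x y, x + y \in C} & forall r : R, {in C, forall x, r *: x \in C}].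

Definition is_basis (B : 'I_n -> vec) : Prop :=
  forall x : vec, exists! c : vec, x = \sum_(j < n) c 0 j *: B j.

Variable B : 'I_n -> vec.

(* V_i = R b_0 + ... + R b_{i-1} (0-based indices) *)
Definition inV (i : nat) (x : vec) : bool :=
  [exists c : vec, x == \sum_(j < n | (j < i)%N) c 0 j *: B j].

(* the (unique, when B is a basis) coordinates of x in B *)
Definition coord (x : vec) : vec :=
  odflt 0 [pick c : vec | x == \sum_(j < n) c 0 j *: B j].

Variable lt : rel R.

Definition lexlt (x y : vec) : bool :=
  [exists i : 'I_n.+1, (0 < i)%N && inV i.-1 x && inV i y && ~~ inV i.-1 y]
  || ([exists i : 'I_n.+1, [&& (0 < i)%N, inV i x, ~~ inV i.-1 x, inV i y & ~~ inV i.-1 y]]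
      && [exists k : 'I_n, [&& coord x 0 k != coord y 0 k,
                               [forall j : 'I_n, (k < j)%N ==> (coord x 0 j == coord y 0 j)]
                             & lt (coord x 0 k) (coord y 0 k)]]).

Variables (P : pred vec) (Gamma : {set R}).

(* admissible candidates at step i (1-based) given C_{i-1} *)
Definition candidate (i : nat) (C : {set vec}) (a : vec) : bool :=
  [&& inV i a, ~~ inV i.-1 a &
      [forall g in Gamma, [forall c in C, P (g *: a + c)]]].

Definition smallest_candidate (i : nat) (C : {set vec}) : option vec :=
  [pick a | candidate i C a &&
            [forall b, candidate i C b ==> (b == a) || lexlt a b]].

Fixpoint greedy (i : nat) : {set vec} :=
  match i with
  | 0 => [set 0]
  | i'.+1 =>
      let C := greedy i' in
      match smallest_candidate i C with
      | Some a => [set r *: a + c | r in [set: R], c in C]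
      | None => C
      end
  end.

Definition lexicode : {set vec} := greedy n.

End Lexicodes.

(* Main.v *)
Require Import Defs.
From HB Require Import structures.
From mathcomp Require Import all_boot all_order all_algebra.
Set Implicit Arguments. Unset Strict Implicit. Unset Printing Implicit Defensive.
Import GRing.Theory.
Local Open Scope ring_scope.

Lemma ex_min_rel (T : finType) (r : rel T) (A : pred T) x0 :
  A x0 -> (forall x, ~~ r x x) -> (forall x y z, r x y -> r y z -> r x z) ->
  (forall x y, A x -> A y -> x != y -> r x y || r y x) ->
  exists2 a, A a & forall b, A b -> (b == a) || r a b.
Proof.
move=> Ax0 irr tr tot.
case: (arg_minnP (fun a => #|[pred c | A c && r c a]|) Ax0) => a Aa amin.
exists a => // b Ab.
case: (eqVneq b a) => //= nba.
case/orP: (tot b a Ab Aa nba) => // rba; exfalso.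
have := amin b Ab; rewrite leqNgt => /negP; apply; apply: proper_card.
apply/properP; split.
  apply/subsetP => c; rewrite !inE => /andP[Ac rcb]; rewrite Ac /=.
  exact: tr rcb rba.
by exists b; rewrite !inE ?Ab ?rba ?(negbTE (irr b)).
Qed.

Section Aux.
Variables (R : finUnitRingType) (n : nat) (B : 'I_n -> 'rV[R]_n).
Hypothesis hB : is_basis B.

Lemma coordP x : x = \sum_(j < n) Defs.coord B x 0 j *: B j.
Proof.
rewrite /Defs.coord; case: pickP => [c /eqP //|none].
have [c [hc _]] := hB x; by move: (none c); rewrite hc eqxx.
Qed.

Lemma coord_uniq x (c : 'rV[R]_n) : x = \sum_(j < n) c 0 j *: B j -> Defs.coord B x = c.
Proof.
move=> hc; have [c0 [_ u]] := hB x.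
by rewrite -(u _ hc) (u _ (coordP x)).
Qed.

Lemma coordD x y : Defs.coord B (x + y) = Defs.coord B x + Defs.coord B y.
Proof.
apply: coord_uniq; rewrite {1}(coordP x) {1}(coordP y) -big_split /=.
by apply: eq_bigr => j _; rewrite mxE scalerDl.
Qed.

Lemma coordZ r x : Defs.coord B (r *: x) = r *: Defs.coord B x.
Proof.
apply: coord_uniq; rewrite {1}(coordP x) scaler_sumr.
by apply: eq_bigr => j _; rewrite mxE scalerA.
Qed.

Lemma coord0 : Defs.coord B 0 = 0.
Proof. by apply: coord_uniq; rewrite big1 // => j _; rewrite mxE scale0r. Qed.

Lemma inVP i x : reflect (forall j : 'I_n, (i <= j)%N -> Defs.coord B x 0 j = 0) (inV B i x).
Proof.
apply: (iffP existsP) => [[c /eqP hx] j hj|h].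
  pose c' := \row_(j < n) (if (j < i)%N then c 0 j else 0).
  have -> : Defs.coord B x = c'.
    apply: coord_uniq; rewrite hx big_mkcond /=.
    by apply: eq_bigr => k _; rewrite mxE; case: ifP => // _; rewrite scale0r.
  by rewrite mxE ltnNge hj.
exists (Defs.coord B x); apply/eqP; rewrite {1}(coordP x) [RHS]big_mkcond /=.
apply: eq_bigr => k _; case: ifP => // /negbT; rewrite -leqNgt => hk.
by rewrite h // scale0r.
Qed.

Lemma inV_mono i j x : (i <= j)%N -> inV B i x -> inV B j x.
Proof.
move=> hij /inVP h; apply/inVP => k hk; apply: h.
exact: leq_trans hij hk.
Qed.

Variable lt : rel R.
Hypothesis hlt : strict_total_order lt.

Definition lexc (u v : 'rV[R]_n) : bool :=
  [exists k : 'I_n, [&& u 0 k != v 0 k,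
     [forall j : 'I_n, (k < j)%N ==> (u 0 j == v 0 j)] & lt (u 0 k) (v 0 k)]].

Lemma lt_neq x y : lt x y -> x != y.
Proof. by case: hlt => irr _ _ h; apply/eqP => e; move: h; rewrite e (negbTE (irr y)). Qed.

Lemma lexc_irr u : ~~ lexc u u.
Proof. by apply/existsP => -[k /and3P[]]; rewrite eqxx. Qed.

Lemma lexc_trans u v w : lexc u v -> lexc v w -> lexc u w.
Proof.
case: hlt => irr tr _.
move=> /existsP[k1 /and3P[_ /forallP e1 l1]] /existsP[k2 /and3P[_ /forallP e2 l2]].
apply/existsP.
case: (ltngtP k1 k2) => [h12|h21|/val_inj h].
- have ek : u 0 k2 = v 0 k2 by apply/eqP; move/implyP: (e1 k2); apply.
  exists k2; rewrite ek l2 (lt_neq l2) andbT /=; apply/forallP => j; apply/implyP => hj.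
  have := e1 j; rewrite (ltn_trans h12 hj) /= => /eqP ->.
  by move/implyP: (e2 j); apply.
- have ek : v 0 k1 = w 0 k1 by apply/eqP; move/implyP: (e2 k1); apply.
  exists k1; rewrite -ek l1 (lt_neq l1) andbT /=; apply/forallP => j; apply/implyP => hj.
  have := e2 j; rewrite (ltn_trans h21 hj) /= => /eqP <-.
  by move/implyP: (e1 j); apply.
- subst k2; have l := tr _ _ _ l1 l2.
  exists k1; rewrite l (lt_neq l) andbT /=; apply/forallP => j; apply/implyP => hj.
  have := e1 j; rewrite hj /= => /eqP ->.
  by move/implyP: (e2 j); apply.
Qed.

Lemma lexc_total u v : u != v -> lexc u v || lexc v u.
Proof.
case: hlt => _ _ tot => huv.
have [k0 hk0] : exists k, u 0 k != v 0 k.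
  apply/existsP; apply: contraR huv => /existsPn h; apply/eqP/matrixP => i j.
  by rewrite ord1; apply/eqP; move: (h j); rewrite negbK.
case: (@arg_maxnP _ k0 (fun k => u 0 k != v 0 k) (fun k : 'I_n => val k) hk0) => k hk kmax.
have ea : [forall j : 'I_n, (k < j)%N ==> (u 0 j == v 0 j)].
  apply/forallP => j; apply/implyP => hj; apply: contraTT hj => hne.
  by rewrite -leqNgt; apply: kmax.
have eb : [forall j : 'I_n, (k < j)%N ==> (v 0 j == u 0 j)].
  apply/forallP => j; apply/implyP => hj; rewrite eq_sym.
  by move/forallP: ea => /(_ j)/implyP; apply.
case/orP: (tot _ _ hk) => h.
  by apply/orP; left; apply/existsP; exists k; rewrite hk ea h.
by apply/orP; right; apply/existsP; exists k; rewrite eq_sym hk eb h.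
Qed.

Lemma lexlt_lexc i (hi : (i < n)%N) a b :
  inV B i.+1 a -> ~~ inV B i a -> inV B i.+1 b -> ~~ inV B i b ->
  lexlt B lt a b = lexc (Defs.coord B a) (Defs.coord B b).
Proof.
move=> ha na hb nb; rewrite /lexlt.
have -> : [exists i' : 'I_n.+1, (0 < i')%N && inV B i'.-1 a && inV B i' b && ~~ inV B i'.-1 b] = false.
  apply/existsP => -[i' /andP[/andP[/andP[_ ha'] _] nb']].
  case: (leqP i'.-1 i) => h.
    by move: na; rewrite (inV_mono h ha').
  by move: nb'; rewrite (inV_mono h hb).
have -> : [exists i' : 'I_n.+1, [&& (0 < i')%N, inV B i' a, ~~ inV B i'.-1 a, inV B i' b & ~~ inV B i'.-1 b]] = true.
  apply/existsP; exists (Ordinal (hi : (i.+1 < n.+1)%N)).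
  by rewrite /= ha na hb nb.
by [].
Qed.

End Aux.

Section More.
Variables (R : finUnitRingType) (n : nat) (B : 'I_n -> 'rV[R]_n).
Hypothesis hB : is_basis B.

Lemma coordN x : Defs.coord B (- x) = - Defs.coord B x.
Proof. by rewrite -scaleN1r (coordZ hB) scaleN1r. Qed.

Lemma coordB x y : Defs.coord B (x - y) = Defs.coord B x - Defs.coord B y.
Proof. by rewrite (coordD hB) coordN. Qed.

Variables (i : nat) (hi : (i < n)%N).
Let k := Ordinal hi.

Lemma inV_coord i' x (j : 'I_n) : inV B i' x -> (i' <= j)%N -> Defs.coord B x 0 j = 0.
Proof. by move/(inVP hB); apply. Qed.

Lemma lead_nz z : inV B i.+1 z -> ~~ inV B i z -> Defs.coord B z 0 k != 0.
Proof.
move=> hz nz; apply: contra nz => /eqP h; apply/(inVP hB) => j hj.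
case: (ltngtP i j) => [hij|hji|eij].
- by apply: (inV_coord hz).
- by move: hji; rewrite ltnNge hj.
- by rewrite (_ : j = k) //; apply: val_inj.
Qed.

Lemma inV_lead z : inV B i.+1 z -> Defs.coord B z 0 k = 0 -> inV B i z.
Proof.
move=> hz h; apply/(inVP hB) => j hj.
case: (ltngtP i j) => [hij|hji|eij].
- by apply: (inV_coord hz).
- by move: hji; rewrite ltnNge hj.
- by rewrite (_ : j = k) //; apply: val_inj.
Qed.

Lemma lexc_lead (lt : rel R) : strict_total_order lt -> forall a b,
  inV B i.+1 a -> inV B i.+1 b ->
  lexc lt (Defs.coord B a) (Defs.coord B b) ->
  lt (Defs.coord B b 0 k) (Defs.coord B a 0 k) -> False.
Proof.
case=> irr tr _ a b ha hb /existsP[k' /and3P[ne /forallP eq l]] l2.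
case: (ltngtP k' k) => [h|h|/val_inj e].
- have := eq k; rewrite h /= => /eqP e.
  by move: l2; rewrite e (negbTE (irr _)).
- by move: ne; rewrite (inV_coord ha h) (inV_coord hb h) eqxx.
- by subst k'; have := tr _ _ _ l l2; rewrite (negbTE (irr _)).
Qed.

End More.

Section Greedy.
Variables (R : finUnitRingType) (n : nat) (B : 'I_n -> 'rV[R]_n)
  (lt : rel R) (P : pred 'rV[R]_n) (Gamma : {set R}).

Lemma greedy_sub i : greedy B lt P Gamma i \subset greedy B lt P Gamma i.+1.
Proof.
apply/subsetP => c hc; cbn [greedy].
case: (smallest_candidate _ _ _ _ _ _) => // a.
by apply/imset2P; exists 0 c; rewrite ?inE // scale0r add0r.
Qed.

Lemma greedy_le i j : (i <= j)%N -> greedy B lt P Gamma i \subset greedy B lt P Gamma j.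
Proof.
elim: j => [|j IH]; first by rewrite leqn0 => /eqP ->.
rewrite leq_eqVlt => /orP[/eqP -> //|h].
exact: subset_trans (IH h) (greedy_sub j).
Qed.

End Greedy.

Theorem mainTheorem8 (R : finUnitRingType) (n : nat) (lt : rel R)
  (B : 'I_n -> 'rV[R]_n) (P : pred 'rV[R]_n) (Gamma : {set R}) :
  principal_left_ideal_ring R ->
  strict_total_order lt ->
  respectful lt ->
  is_basis B ->
  left_multiplicative P ->
  P 0 ->
  generator_set Gamma ->
  forall C : {set 'rV[R]_n},
    left_submodule C ->
    lexicode B lt P Gamma \subset C ->
    (forall x, x \in C -> P x) ->
    C = lexicode B lt P Gamma.
Proof.
move=> hPLIR hlt hresp hB _ _ _ C [C0 CD CZ] hsub hPC.
have gsubC i : (i <= n)%N -> greedy B lt P Gamma i \subset C.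
  by move=> hi; apply: subset_trans hsub; exact: greedy_le.
have CB : {in C &, forall x y, x - y \in C}.
  by move=> x y xC yC; rewrite -scaleN1r; apply: CD => //; apply: CZ.
suff key : forall i, (i <= n)%N -> forall y, y \in C -> inV B i y ->
    y \in greedy B lt P Gamma i.
  apply/eqP; rewrite eqEsubset hsub andbT; apply/subsetP => y yC.
  apply: key => //; apply/(inVP hB) => j hj.
  by move: (ltn_ord j); rewrite ltnNge hj.
elim=> [_ y yC /(inVP hB) h0|i IH hi y yC hy].
  have e : Defs.coord B y = 0.
    by apply/matrixP => a j; rewrite ord1 mxE h0.
  by rewrite /= inE (coordP hB y) e big1 // => j _; rewrite mxE scale0r.
have hin : (i < n)%N := hi.
pose k := Ordinal hin.
have Gi := gsubC i (ltnW hi).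
have candC z : z \in C -> inV B i.+1 z -> ~~ inV B i z ->
    candidate B P Gamma i.+1 (greedy B lt P Gamma i) z.
  move=> zC hz nz; rewrite /candidate hz nz /=.
  apply/forallP => g; apply/implyP => _; apply/forallP => c; apply/implyP => hc.
  by apply: hPC; apply: CD; [apply: CZ|apply: (subsetP Gi)].
case: (boolP (inV B i y)) => hyi.
  by apply: (subsetP (greedy_sub B lt P Gamma i)); apply: IH => //; apply: ltnW.
case E: (smallest_candidate B lt P Gamma i.+1 (greedy B lt P Gamma i)) => [a|].
- have aG : a \in greedy B lt P Gamma i.+1.
    cbn [greedy]; rewrite E; apply/imset2P; exists 1 0; rewrite ?inE //.
      by apply: (subsetP (greedy_le B lt P Gamma (leq0n i))); rewrite /= inE.
    by rewrite scale1r addr0.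
  have aC : a \in C := subsetP (gsubC _ hi) a aG.
  have E' := E; move: E'; rewrite /smallest_candidate; case: pickP => // a' /andP[ca /forallP amin] [ea].
  subst a'.
  move: (ca) => /and3P[ha nha _]; rewrite /= in nha.
  have anz := lead_nz hB hin ha nha.
  pose I := [set Defs.coord B z 0 k | z in [pred z | (z \in C) && inV B i.+1 z]].
  have memI z : z \in C -> inV B i.+1 z -> Defs.coord B z 0 k \in I.
    by move=> zC hz; apply/imsetP; exists z; rewrite // inE zC hz.
  have Iid : left_ideal I.
    split.
    - have e0 : Defs.coord B 0 0 k = 0 by rewrite (coord0 hB) mxE.
      rewrite -e0; apply: memI => //.
      by apply/(inVP hB) => j _; rewrite (coord0 hB) mxE.
    - move=> x1 x2 /imsetP[z1 /[!inE]/andP[z1C hz1] ->] /imsetP[z2 /[!inE]/andP[z2C hz2] ->].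
      have -> : (Defs.coord B z1 0 k - Defs.coord B z2 0 k) = Defs.coord B (z1 - z2) 0 k.
        by rewrite (coordB hB) !mxE.
      apply: memI; first exact: CB.
      apply/(inVP hB) => j hj; rewrite (coordB hB) !mxE (inV_coord hB hz1 hj).
      by rewrite (inV_coord hB hz2 hj) subr0.
    - move=> r x1 /imsetP[z1 /[!inE]/andP[z1C hz1] ->].
      have -> : r * Defs.coord B z1 0 k = Defs.coord B (r *: z1) 0 k.
        by rewrite (coordZ hB) mxE.
      apply: memI; first exact: CZ.
      by apply/(inVP hB) => j hj; rewrite (coordZ hB) mxE (inV_coord hB hz1 hj) mulr0.
  have [g Ig] := hPLIR I Iid.
  have gI : g \in I by rewrite Ig; apply/imsetP; exists 1; rewrite ?mul1r.
  have aI := memI a aC ha.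
  have sub1 : lprincipal (Defs.coord B a 0 k) \subset lprincipal g.
    move: aI; rewrite Ig => /imsetP[s _ es].
    apply/subsetP => x /imsetP[r _ ->]; apply/imsetP; exists (r * s) => //.
    by rewrite es mulrA.
  have sub2 : lprincipal g \subset lprincipal (Defs.coord B a 0 k).
    apply: contraT => nsub.
    have pr : lprincipal (Defs.coord B a 0 k) \proper lprincipal g.
      by rewrite properEneq sub1 andbT; apply: contraNneq nsub => ->.
    have gnz : g != 0.
      apply: contra anz => /eqP g0; move: aI; rewrite Ig g0.
      by case/imsetP => r _ ->; rewrite mulr0.
    have [beta ubeta hbeta] := hresp _ _ gnz anz pr.
    have lt1 := hbeta 1 (@unitr1 R); rewrite mul1r in lt1.
    move: gI => /imsetP[z0 /[!inE]/andP[z0C hz0] eg].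
    pose b := beta *: z0.
    have hb : inV B i.+1 b.
      by apply/(inVP hB) => j hj; rewrite (coordZ hB) mxE (inV_coord hB hz0 hj) mulr0.
    have bk : Defs.coord B b 0 k = beta * g by rewrite (coordZ hB) mxE eg.
    have nb : ~~ inV B i b.
      apply/negP => /(inVP hB)/(_ k (leqnn i)); rewrite bk => /eqP.
      apply/negP; apply: contra gnz => /eqP bg0.
      by rewrite -(mulKr ubeta g) bg0 mulr0.
    have cb := candC b (CZ beta _ z0C) hb nb.
    case/orP: (implyP (amin b) cb) => [/eqP eb|].
      by case: hlt => irr _ _; move: lt1; rewrite -bk eb (negbTE (irr _)).
    rewrite (lexlt_lexc hB lt hin ha nha hb nb) => lx.
    by case: (@lexc_lead _ _ _ hB i hin lt hlt _ _ ha hb lx); rewrite bk.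
  have : Defs.coord B y 0 k \in lprincipal (Defs.coord B a 0 k).
    by apply: (subsetP sub2); rewrite -Ig; apply: memI.
  case/imsetP => r _ er.
  have zC : y - r *: a \in C by apply: CB => //; apply: CZ.
  have hz : inV B i (y - r *: a).
    apply: (@inV_lead _ _ _ hB i hin).
      apply/(inVP hB) => j hj; rewrite (coordB hB) (coordZ hB) !mxE.
      by rewrite (inV_coord hB hy hj) (inV_coord hB ha hj) mulr0 subr0.
    by rewrite (coordB hB) (coordZ hB) !mxE er subrr.
  have zG := IH (ltnW hi) _ zC hz.
  cbn [greedy]; rewrite E; apply/imset2P; exists r (y - r *: a); rewrite ?inE //.
  by rewrite addrC subrK.
- exfalso.
  have tot : forall x z, candidate B P Gamma i.+1 (greedy B lt P Gamma i) x ->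
      candidate B P Gamma i.+1 (greedy B lt P Gamma i) z -> x != z ->
      lexc lt (Defs.coord B x) (Defs.coord B z) || lexc lt (Defs.coord B z) (Defs.coord B x).
    move=> x z _ _ nxz; apply: (lexc_total hlt); apply: contra nxz => /eqP e.
    by apply/eqP; rewrite (coordP hB x) (coordP hB z) e.
  have [a ca amin] := @ex_min_rel _ (fun a b => lexc lt (Defs.coord B a) (Defs.coord B b))
     (candidate B P Gamma i.+1 (greedy B lt P Gamma i)) y (candC y yC hy hyi)
     (fun x => lexc_irr _ _) (fun x y z => @lexc_trans _ _ _ hlt _ _ _) tot.
  move: E; rewrite /smallest_candidate; case: pickP => // /(_ a); rewrite ca /=.
  move=> /negbT/negP h _; apply: h; apply/forallP => b; apply/implyP => cb.
  move: (ca) (cb) => /and3P[ha nha _] /and3P[hb nb _]; rewrite /= in nha nb.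
  by rewrite (lexlt_lexc hB lt hin ha nha hb nb); apply: amin.
Qed.
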